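(* There is a universal constant $\alpha>1$ such that for all integers $p\ge 2$ and $k\ge 1$, every family of more than $(\alpha\, p\log(pk))^k$ distinct sets, each of size $k$, contains a $p$-sunflower.
   Context: A $p$-sunflower is a family of $p$ distinct sets whose pairwise intersections are all identical (i.e. there is a set $Y$ with $A\cap B=Y$ for every two distinct members $A,B$ of the family). All logarithms are base $2$. *)

(* Defs.v *)
From mathcomp Require Import all_boot.
From Stdlib Require Import Reals.
Set Implicit Arguments. Unset Strict Implicit. Unset Printing Implicit Defensive.

Definition log2 (x : R) : R := (ln x / ln 2)%R.

Definition is_sunflower (T : finType) (p : nat) (S : {set {set T}}) : Prop :=
  #|S| = p /\
  exists Y : {set T}, forall A B : {set T}, A \in S -> B \in S -> A != B -> A :&: B = Y.

(* Main.v *)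
Require Import Defs.
From mathcomp Require Import all_boot.
From Stdlib Require Import Reals.
From Stdlib Require Import Lra FunctionalExtensionality Lia.
From mathcomp Require Import all_boot.
From mathcomp Require Import zify.
Set Implicit Arguments. Unset Strict Implicit. Unset Printing Implicit Defensive.

Definition keyf (T : finType) (ph : {set T} -> {set T}) (s : {set T}) : nat :=
  #|ph s| * #|{: {set T}}| + enum_rank s.

Definition bestp (T : finType) (F : {set {set T}}) (ph : {set T} -> {set T})
  (Y : {set T}) (s : {set T}) : bool :=
  (s \in F) && (ph s \subset Y).

Definition best (T : finType) (F : {set {set T}}) (ph : {set T} -> {set T})
  (Y : {set T}) : {set T} :=
  odflt set0 [pick s | bestp F ph Y s &&
     [forall s', bestp F ph Y s' ==> (keyf ph s <= keyf ph s')]].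

Lemma keyf_inj (T : finType) ph (s1 s2 : {set T}) :
  keyf ph s1 = keyf ph s2 -> s1 = s2.
Proof.
rewrite /keyf => E.
have := congr1 (fun n => n %% #|{: {set T}}|) E => /=.
rewrite !modnMDl !modn_small; try exact: ltn_ord.
by move/ord_inj/enum_rank_inj.
Qed.

Lemma keyf_le (T : finType) ph (s1 s2 : {set T}) :
  keyf ph s1 <= keyf ph s2 -> #|ph s1| <= #|ph s2|.
Proof.
rewrite /keyf => H.
have h1 := ltn_ord (enum_rank s1).
have h2 := ltn_ord (enum_rank s2).
set N := #|{: {set T}}| in H h1 h2 *.
set a := #|ph s1| in H *; set b := #|ph s2| in H *.
rewrite leqNgt; apply/negP => Hab.
have : (b.+1) * N <= a * N by rewrite leq_mul2r Hab orbT.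
rewrite mulSn. move: H h1 h2. 
set x := (enum_rank s1 : nat); set y := (enum_rank s2 : nat). lia.
Qed.

Lemma best_spec (T : finType) (F : {set {set T}}) (ph : {set T} -> {set T}) (Y S : {set T}) :
  S \in F -> ph S \subset Y ->
  [/\ best F ph Y \in F, ph (best F ph Y) \subset Y &
     forall s', s' \in F -> ph s' \subset Y -> keyf ph (best F ph Y) <= keyf ph s'].
Proof.
move=> SF SY.
have PS : bestp F ph Y S by rewrite /bestp SF SY.
rewrite /best; case: pickP => [b /andP [Pb /forallP Hb] | H] /=.
  move: Pb; rewrite /bestp => /andP [bF bY]; split => // s' s'F s'Y.
  by have := Hb s'; rewrite /bestp s'F s'Y.
exfalso.
case: (arg_minnP (keyf ph) PS) => m Pm Hm.
have := H m; rewrite Pm /=; move/negP; apply.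
by apply/forallP => s'; apply/implyP => Ps'; apply: Hm.
Qed.

Lemma best_uniq (T : finType) (F : {set {set T}}) (ph : {set T} -> {set T}) (Y b : {set T}) :
  b \in F -> ph b \subset Y ->
  (forall s', s' \in F -> ph s' \subset Y -> keyf ph b <= keyf ph s') ->
  best F ph Y = b.
Proof.
move=> bF bY Hb.
have [b1F b1Y Hb1] := best_spec bF bY.
apply: (@keyf_inj _ ph); apply/eqP; rewrite eqn_leq.
by rewrite Hb1 // Hb.
Qed.

Fixpoint phi (T : finType) (F : {set {set T}}) (t : nat) (Wf : nat -> {set T})
  (S : {set T}) : {set T} :=
  match t with
  | 0 => S
  | t'.+1 => phi F t' Wf (best F (phi F t' Wf) (Wf t' :|: phi F t' Wf S)) :\: Wf t'
  end.

Lemma subD_helper (T : finType) (A B C : {set T}) :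
  A \subset B :|: C -> A :\: B \subset C.
Proof.
move/subsetP=> H; apply/subsetP => x; rewrite inE => /andP [xB xA].
by have := H x xA; rewrite inE (negbTE xB).
Qed.

Lemma phi_best (T : finType) (F : {set {set T}}) t (Wf : nat -> {set T}) (S : {set T}) :
  S \in F ->
  let Y := Wf t :|: phi F t Wf S in
  let b := best F (phi F t Wf) Y in
  [/\ b \in F, phi F t Wf b \subset Y,
     forall s', s' \in F -> phi F t Wf s' \subset Y ->
        keyf (phi F t Wf) b <= keyf (phi F t Wf) s' &
     #|phi F t Wf b| <= #|phi F t Wf S| ].
Proof.
move=> SF Y b.
have SY : phi F t Wf S \subset Y by rewrite subsetUr.
have [bF bY Hb] := best_spec SF SY.
split => //; apply: keyf_le; exact: Hb.
Qed.

Lemma phi_sub (T : finType) (F : {set {set T}}) t (Wf : nat -> {set T}) (S : {set T}) :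
  S \in F -> phi F t.+1 Wf S \subset phi F t Wf S.
Proof.
move=> SF; have [_ bY _ _] := phi_best t Wf SF.
by rewrite /=; apply: subD_helper.
Qed.

Lemma phi_subS (T : finType) (F : {set {set T}}) t (Wf : nat -> {set T}) (S : {set T}) :
  S \in F -> phi F t Wf S \subset S.
Proof.
move=> SF; elim: t => [|t IH] //=.
exact: subset_trans (phi_sub t Wf SF) IH.
Qed.

Lemma phi_disj (T : finType) (F : {set {set T}}) t (Wf : nat -> {set T}) (S : {set T}) u :
  u < t -> [disjoint phi F t Wf S & Wf u].
Proof.
elim: t S => [|t IH] S //= ut.
rewrite -setI_eq0; apply/eqP/setP => x; rewrite !inE.
move: ut; rewrite ltnS leq_eqVlt => /orP [/eqP -> | ut]; last first.
  have := IH (best F (phi F t Wf) (Wf t :|: phi F t Wf S)) ut.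
  rewrite -setI_eq0 => /eqP/setP/(_ x); rewrite !inE => H.
  by rewrite -andbA H andbF.
by case: (x \in Wf t); rewrite /= ?andbF.
Qed.

Lemma phi_chain (T : finType) (F : {set {set T}}) t (Wf : nat -> {set T}) (S : {set T}) :
  S \in F -> exists2 A, A \in F &
     A \subset (\bigcup_(u < t) Wf u) :|: phi F t Wf S.
Proof.
elim: t S => [|t IH] S SF /=.
  by exists S => //; rewrite subsetUr.
have [bF bY _ _] := phi_best t Wf SF.
have [A AF HA] := IH _ bF.
exists A => //; apply: (subset_trans HA).
apply/subsetP => x; rewrite !inE => /orP [|xb].
  case/bigcupP => u _ xu; apply/orP; left.
  by apply/bigcupP; exists (widen_ord (leqnSn t) u).
case xW: (x \in Wf t).
  apply/orP; left; apply/bigcupP; exists ord_max => //.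
by rewrite xb orbT.
Qed.

Lemma phi_ext (T : finType) (F : {set {set T}}) t (Wf Wf' : nat -> {set T}) :
  (forall u, u < t -> Wf u = Wf' u) -> phi F t Wf = phi F t Wf'.
Proof.
elim: t => [|t IH] H //=.
rewrite IH; last by move=> u ut; apply: H; apply: ltnW.
by rewrite H.
Qed.

Definition decT (T : finType) (F : {set {set T}}) t (Wf : nat -> {set T}) :=
  phi F t Wf (best F (phi F t Wf) (Wf t)).

Lemma decT_spec (T : finType) (F : {set {set T}}) t (Wf Wf' : nat -> {set T}) (S : {set T}) :
  S \in F ->
  (forall u, u < t -> Wf' u = Wf u) ->
  Wf' t = Wf t :|: phi F t.+1 Wf S ->
  phi F t.+1 Wf S \subset decT F t Wf' /\ #|decT F t Wf'| <= #|phi F t Wf S|.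
Proof.
move=> SF Hlt Ht.
have [bF bY Hb Hcard] := phi_best t Wf SF.
set b := best F (phi F t Wf) (Wf t :|: phi F t Wf S) in bF bY Hb Hcard.
rewrite /decT (phi_ext F Hlt) Ht.
have -> : best F (phi F t Wf) (Wf t :|: phi F t.+1 Wf S) = b.
  apply: best_uniq => //.
  - by rewrite /= -/b; apply/subsetP => x xb; rewrite !inE xb; case: (x \in Wf t).
  - move=> s' s'F s'Z; apply: Hb => //; apply: (subset_trans s'Z).
    by rewrite setUS // phi_sub.
by split => //=; rewrite -/b subsetDl.
Qed.

Lemma card_bigcup_le (I T : finType) (P : pred I) (B : I -> {set T}) :
  #|\bigcup_(i | P i) B i| <= \sum_(i | P i) #|B i|.
Proof.
elim/big_ind2: _ => [|n A m B' hA hB|i _]; first by rewrite cards0.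
  exact: leq_trans (leq_card_setU A B').1 (leq_add hA hB).
by [].
Qed.

Definition Wc (T : finType) p L (i : 'I_p) (c : {ffun T -> 'I_p * 'I_L}) (u : nat)
  : {set T} := [set x | ((c x).1 == i) && ((c x).2 == u :> nat)].

Definition failb (T : finType) (F : {set {set T}}) p L (i : 'I_p) t
  (c : {ffun T -> 'I_p * 'I_L}) : bool :=
  [forall S in F, phi F t (Wc i c) S != set0].

Lemma card_fib (T : finType) p L (c' : {ffun T -> 'I_p * 'I_L}) (D S : {set T}) :
  #|[set cs : {ffun T -> 'I_p * 'I_L} * {set T} |
      (cs.2 == S) && [forall x, (x \notin D) ==> (cs.1 x == c' x)]]|
  <= (p * L) ^ #|D|.
Proof.
set Fib := [set cs | _].
pose f (cs : {ffun T -> 'I_p * 'I_L} * {set T}) :=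
  [ffun x : {x : T | x \in D} => cs.1 (val x)].
rewrite -(card_in_imset (f := f)); last first.
  move=> [c1 S1] [c2 S2]; rewrite !inE /= => /andP [/eqP -> /forallP H1]
    /andP [/eqP -> /forallP H2] /ffunP Hf.
  congr pair; apply/ffunP => x.
  case xD: (x \in D).
    by have := Hf (exist _ x xD); rewrite !ffunE.
  have := H1 x; have := H2 x; rewrite xD /= => /eqP -> /eqP -> //.
apply: leq_trans (max_card _) _.
rewrite card_ffun card_prod !card_ord card_sig.
by apply: eq_leq; congr (_ ^ _); apply: eq_card.
Qed.

Lemma bad_count (T : finType) (F : {set {set T}}) p L (i : 'I_p) t j r :
  t < L -> 0 < j ->
  (forall Z : {set T}, Z != set0 -> #|[set A in F | Z \subset A]| * r ^ #|Z| <= #|F|) ->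
  #|[set cs : {ffun T -> 'I_p * 'I_L} * {set T} |
      [&& cs.2 \in F, failb F i t cs.1,
          #|phi F t.+1 (Wc i cs.1) cs.2| == j &
          #|phi F t (Wc i cs.1) cs.2| < j.*2]]| * r ^ j
  <= #|[set c : {ffun T -> 'I_p * 'I_L} | failb F i t c]| * 4 ^ j * (p * L) ^ j * #|F|.
Proof.
move=> tL j0 spread.
set Bad := [set cs | _].
pose Dset (c' : {ffun T -> 'I_p * 'I_L}) := [set D : {set T} |
  [&& D \subset decT F t (Wc i c'), #|D| == j & #|decT F t (Wc i c')| < j.*2]].
pose Sset (D : {set T}) := [set A in F | D \subset A].
pose Fib (c' : {ffun T -> 'I_p * 'I_L}) (D S : {set T}) :=
  [set cs : {ffun T -> 'I_p * 'I_L} * {set T} |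
      (cs.2 == S) && [forall x, (x \notin D) ==> (cs.1 x == c' x)]].
have sub : Bad \subset \bigcup_(c' | failb F i t c') \bigcup_(D in Dset c')
              \bigcup_(S in Sset D) Fib c' D S.
  apply/subsetP => -[c S]; rewrite inE /= => /and4P [SF fc Hj Ha].
  have [D eD] : {D | phi F t.+1 (Wc i c) S = D} by exists (phi F t.+1 (Wc i c) S).
  have Hj' : #|phi F t.+1 (Wc i c) S| == j := Hj.
  rewrite eD in Hj'; clear Hj.
  pose col : 'I_p * 'I_L := (i, Ordinal tL).
  pose c' := [ffun x => if x \in D then col else c x].
  have Hlt : forall u, u < t -> Wc i c' u = Wc i c u.
    move=> u ut; apply/setP => x; rewrite !inE ffunE.
    case xD: (x \in D) => /=.
      have dis' : u < t.+1 by apply: leq_trans ut _.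
      have := phi_disj F (Wc i c) S dis'; rewrite eD => /disjoint_setI0 /setP /(_ x).
      rewrite !inE xD /= => ->.
      by rewrite (_ : (t == u :> nat) = false) ?andbF //; apply/eqP => E;
        rewrite E ltnn in ut.
    by [].
  have Ht : Wc i c' t = Wc i c t :|: D.
    apply/setP => x; rewrite !inE ffunE.
    by case xD: (x \in D); rewrite /= ?eqxx ?orbT ?orbF.
  rewrite -eD in Ht; have [HD Hcard] := decT_spec SF Hlt Ht; rewrite eD in HD.
  have fc' : failb F i t c' = failb F i t c by rewrite /failb (phi_ext F Hlt).
  apply/bigcupP; exists c'; first by rewrite fc'.
  apply/bigcupP; exists D.
    by rewrite inE HD Hj' /=; apply: leq_ltn_trans Hcard Ha.
  apply/bigcupP; exists S.
    by rewrite inE SF /= -eD; apply: subset_trans (phi_sub t _ SF) (phi_subS t _ SF).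
  rewrite inE /= eqxx /=; apply/forallP => x; apply/implyP => xD.
  by rewrite ffunE (negbTE xD).
have H1 : #|Bad| <= \sum_(c' | failb F i t c') \sum_(D in Dset c')
                       \sum_(S in Sset D) (p * L) ^ j.
  apply: leq_trans (subset_leq_card sub) _.
  apply: leq_trans (card_bigcup_le _ _) _; apply: leq_sum => c' _.
  apply: leq_trans (card_bigcup_le _ _) _; apply: leq_sum => D.
  rewrite inE => /and3P [_ /eqP HDj _].
  apply: leq_trans (card_bigcup_le _ _) _; apply: leq_sum => S _.
  by rewrite -HDj; apply: card_fib.
apply: leq_trans (leq_mul H1 (leqnn _)) _.
rewrite big_distrl /= -sum_nat_cond_const -!mulnA big_distrl /=.
apply: leq_sum => c' _.
rewrite big_distrl /=.
have HDs : #|Dset c'| <= 4 ^ j.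
  case: (ltnP #|decT F t (Wc i c')| j.*2) => h.
    apply: (@leq_trans #|powerset (decT F t (Wc i c'))|).
      apply: subset_leq_card; apply/subsetP => D; rewrite !inE.
      by case/and3P.
    rewrite card_powerset (_ : 4 = 2 ^ 2) // -expnM leq_exp2l // mul2n.
    exact: ltnW.
  rewrite (_ : Dset c' = set0) ?cards0 //; apply/setP => D.
  by rewrite !inE; rewrite ltnNge h /= !andbF.
apply: (@leq_trans (\sum_(D in Dset c') ((p * L) ^ j * #|F|))).
  apply: leq_sum => D; rewrite inE => /and3P [_ /eqP HDj _].
  rewrite sum_nat_const mulnAC [_ * #|F|]mulnC leq_mul2r; apply/orP; right.
  rewrite -HDj; apply: spread.
  by apply/eqP => D0; rewrite D0 cards0 in HDj; rewrite -HDj in j0.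
by rewrite sum_nat_const; apply: leq_mul HDs (leqnn _).
Qed.

Lemma geo_sum (X : nat) (y : nat -> nat) K :
  (forall j, 2 ^ j * y j <= X) -> \sum_(j < K) y j <= X.*2.
Proof.
move=> H.
suff : (\sum_(j < K) y j) * 2 ^ K + X.*2 <= X.*2 * 2 ^ K.
  move=> h; have h2 : (\sum_(j < K) y j) * 2 ^ K <= X.*2 * 2 ^ K.
    exact: leq_trans (leq_addr _ _) h.
  by rewrite leq_pmul2r ?expn_gt0 in h2.
elim: K => [|K IH]; first by rewrite big_ord0 mul0n expn0 muln1.
rewrite big_ord_recr /= expnS.
have := H K; move: IH.
set S := \sum_(i < K) y i; set e := 2 ^ K; set yK := y K.
nia.
Qed.

Lemma eight_le (j : nat) : 0 < j -> 8 * j <= 8 ^ j.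
Proof.
elim: j => // j IH _; case: j IH => [|j] IH //.
rewrite expnS; have := IH isT; lia.
Qed.

Lemma sum_bool_card (I : finType) (P Q : pred I) :
  \sum_(i | P i) (Q i : nat) = #|[set i | P i && Q i]|.
Proof.
rewrite -[RHS]muln1 -sum_nat_cond_const big_mkcondr /=.
by apply: eq_bigr => i _; case: (Q i).
Qed.

Lemma fail_mono (T : finType) (F : {set {set T}}) p L (i : 'I_p) t
  (c : {ffun T -> 'I_p * 'I_L}) : failb F i t.+1 c -> failb F i t c.
Proof.
move=> /forallP H; apply/forallP => S; apply/implyP => SF.
have := H S; rewrite SF /= => h; apply/negP => /eqP e.
move: h; apply/negP; rewrite negbK -subset0 -e.
exact: phi_sub.
Qed.

Definition Psi (T : finType) (F : {set {set T}}) p L (i : 'I_p) t : nat :=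
  \sum_(cs : {ffun T -> 'I_p * 'I_L} * {set T} | failb F i t cs.1 && (cs.2 \in F))
     #|phi F t (Wc i cs.1) cs.2|.

Lemma Psi_ge (T : finType) (F : {set {set T}}) p L (i : 'I_p) t :
  #|[set c : {ffun T -> 'I_p * 'I_L} | failb F i t c]| * #|F| <= Psi F L i t.
Proof.
rewrite -cardsX -sum1_card /Psi.
rewrite (eq_bigl (fun cs => failb F i t cs.1 && (cs.2 \in F))); last first.
  by move=> [c S]; rewrite !inE.
apply: leq_sum => -[c S] /andP [/forallP fc SF] /=.
by rewrite card_gt0; have := fc S; rewrite SF.
Qed.

Lemma round (T : finType) (F : {set {set T}}) p L (i : 'I_p) t :
  t < L ->
  (forall Z : {set T}, Z != set0 ->
     #|[set A in F | Z \subset A]| * (64 * (p * L)) ^ #|Z| <= #|F|) ->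
  4 * Psi F L i t.+1 <= 3 * Psi F L i t.
Proof.
move=> tL spread.
have p0 : 0 < p := leq_ltn_trans (leq0n _) (ltn_ord i).
have L0 : 0 < L := leq_ltn_trans (leq0n t) tL.
set M := p * L.
have M0 : 0 < M by rewrite muln_gt0 p0 L0.
pose C := {ffun T -> 'I_p * 'I_L}.
pose P (cs : C * {set T}) := failb F i t cs.1 && (cs.2 \in F).
pose a (cs : C * {set T}) := #|phi F t (Wc i cs.1) cs.2|.
pose b (cs : C * {set T}) := #|phi F t.+1 (Wc i cs.1) cs.2|.
set X := #|[set c : C | failb F i t c]| * #|F|.
have XP : X <= Psi F L i t by apply: Psi_ge.
have SA : Psi F L i t.+1 <= \sum_(cs | P cs) b cs.
  rewrite /Psi big_mkcond [X in _ <= X]big_mkcond; apply: leq_sum => cs _.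
  case: ifP => // /andP [f SF]; by rewrite /P (fail_mono f) SF.
have SB : \sum_(cs | P cs) 2 * b cs <=
          \sum_(cs | P cs) a cs + 2 * \sum_(cs | P cs) ((a cs < (b cs).*2) * b cs).
  rewrite big_distrr -big_split /=; apply: leq_sum => cs _.
  case: ltnP => h /=; rewrite ?mul1n ?mul0n ?muln0 ?addn0; last by rewrite mul2n.
  exact: leq_addl.
set K := #|T|.+1.
pose Bad j := [set cs : C * {set T} |
      [&& cs.2 \in F, failb F i t cs.1,
          #|phi F t.+1 (Wc i cs.1) cs.2| == j &
          #|phi F t (Wc i cs.1) cs.2| < j.*2]].
have SC : \sum_(cs | P cs) ((a cs < (b cs).*2) * b cs) =
          \sum_(j < K) (j * #|Bad j|).
  have E : forall cs, ((a cs < (b cs).*2) * b cs) =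
     \sum_(j < K) (((a cs < (b cs).*2) && (b cs == j)) * j).
    move=> cs.
    have bK : b cs < K by rewrite ltnS max_card.
    rewrite (bigD1 (Ordinal bK)) //= eqxx andbT big1 ?addn0 //.
    move=> j /eqP nj; case: eqP; rewrite ?andbF ?mul0n //.
    by move=> bj; exfalso; apply: nj; apply: ord_inj; rewrite /= bj.
  rewrite (eq_bigr _ (fun cs _ => E cs)) exchange_big /=.
  apply: eq_bigr => j _.
  rewrite -big_distrl /= sum_bool_card mulnC; congr (_ * _).
  apply: eq_card => cs; rewrite !inE /P /a /b.
  case: (cs.2 \in F); case: (failb F i t cs.1); rewrite /= ?andbF //.
  by case: eqP => [-> | _]; rewrite ?andbF ?andbT.
have SD : 4 * \sum_(j < K) (j * #|Bad j|) <= X.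
  have G := @geo_sum X (fun j => 8 * (j * #|Bad j|)) K.
  rewrite -big_distrr /= in G.
  suff : 8 * \sum_(j < K) (j * #|Bad j|) <= X.*2 by rewrite -mul2n; lia.
  apply: G => j.
  case: j => [|j]; first by rewrite !mul0n muln0.
  have H := bad_count i tL (isT : 0 < j.+1) spread.
  rewrite -/(Bad j.+1) -/X in H.
  rewrite -/C in H.
  have e64 : (64 * M) ^ j.+1 = 16 ^ j.+1 * (4 ^ j.+1 * M ^ j.+1).
    by rewrite -!expnMn mulnA.
  rewrite e64 mulnA in H.
  have H' : #|Bad j.+1| * 16 ^ j.+1 <= X.
    have pos : 0 < 4 ^ j.+1 * M ^ j.+1 by rewrite muln_gt0 !expn_gt0 M0.
    rewrite -(leq_pmul2r pos); apply: leq_trans H _.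
    rewrite /X -/M; apply: eq_leq.
    set A1 := #|[set c | _]|; set B1 := #|F|; set u1 := 4 ^ j.+1; set v1 := M ^ j.+1.
    by rewrite -!mulnA; congr (_ * _); rewrite [RHS]mulnC mulnA.
  apply: leq_trans H'.
  have e8 := eight_le (isT : 0 < j.+1).
  have e16 : 16 ^ j.+1 = 2 ^ j.+1 * 8 ^ j.+1 by rewrite -expnMn.
  rewrite e16.
  set u := 2 ^ j.+1 in e16 *; set v := 8 ^ j.+1 in e8 e16 *.
  set w := #|Bad j.+1|.
  nia.
rewrite -/a in SB *.
have : \sum_(cs | P cs) a cs = Psi F L i t by [].
move=> EA.
rewrite SC EA -big_distrr /= in SB.
set s1 := \sum_(cs | P cs) b cs in SA SB *. set s2 := \sum_(j < K) j * #|Bad j| in SB SD *. move: SA SB SD XP. set q1 := Psi F L i t.+1. set q2 := Psi F L i t.  lia.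
Qed.

Lemma iter_dec (f : nat -> nat) L :
  (forall t, t < L -> 4 * f t.+1 <= 3 * f t) ->
  4 ^ L * f L <= 3 ^ L * f 0.
Proof.
move=> H; suff : forall n, n <= L -> 4 ^ n * f n <= 3 ^ n * f 0 by apply.
elim => [|n IH] nL; first by rewrite !expn0 !mul1n.
have h1 := H n nL; have h2 := IH (ltnW nL).
rewrite !expnS.
set x := 4 ^ n in h2 *; set y := 3 ^ n in h2 *.
nia.
Qed.

Lemma Psi0_le (T : finType) (F : {set {set T}}) p L (i : 'I_p) k :
  (forall A, A \in F -> #|A| = k) ->
  Psi F L i 0 <= #|{ffun T -> 'I_p * 'I_L}| * #|F| * k.
Proof.
move=> Hk; rewrite /Psi /=.
apply: (@leq_trans (\sum_(cs : {ffun T -> 'I_p * 'I_L} * {set T} |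
          failb F i 0 cs.1 && (cs.2 \in F)) k)).
  by apply: leq_sum => cs /andP [_ SF]; rewrite Hk.
rewrite sum_nat_cond_const leq_mul2r; apply/orP; right.
have -> : #|{ffun T -> 'I_p * 'I_L}| * #|F| =
    #|setX [set: {ffun T -> 'I_p * 'I_L}] F| by rewrite cardsX cardsT.
apply: subset_leq_card; apply/subsetP => -[c S].
by rewrite !inE => /andP [_ ->].
Qed.

Lemma disjoint_members (T : finType) (F : {set {set T}}) p k L :
  0 < k -> 0 < p -> p * k * 3 ^ L < 4 ^ L ->
  (forall A, A \in F -> #|A| = k) -> 0 < #|F| ->
  (forall Z : {set T}, Z != set0 ->
     #|[set A in F | Z \subset A]| * (64 * (p * L)) ^ #|Z| <= #|F|) ->
  exists f : 'I_p -> {set T}, (forall i, f i \in F) /\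
     (forall i j, i != j -> [disjoint f i & f j]).
Proof.
move=> k0 p0 hL Hk F0 spread.
pose C := {ffun T -> 'I_p * 'I_L}.
set N := #|{: C}|.
have L0 : 0 < L.
  case E: L => //; move: hL; rewrite E !expn0 muln1 ltnS leqn0 muln_eq0.
  by case/orP => /eqP h; [move: p0 | move: k0]; rewrite h.
have N0 : 0 < N.
  by rewrite /N card_ffun card_prod !card_ord expn_gt0 muln_gt0 p0 L0.
have Hi : forall i : 'I_p, p * #|[set c : C | failb F i L c]| < N.
  move=> i.
  have h1 := Psi_ge F L i L.
  have h2 : 4 ^ L * Psi F L i L <= 3 ^ L * Psi F L i 0 :=
    @iter_dec (fun t => Psi F L i t) L (fun t (tL : t < L) => round i tL spread).
  have h3 := Psi0_le L i Hk.
  rewrite -/C -/N in h1 h3.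
  set P := #|[set c : C | failb F i L c]| in h1 *.
  set u := 4 ^ L in hL h2 *; set v := 3 ^ L in hL h2 *.
  set q := Psi F L i L in h1 h2; set q0 := Psi F L i 0 in h2 h3.
  set FF := #|F| in F0 h1 h3.
  have e1 : u * (P * FF) <= v * (N * FF * k) := leq_trans (leq_mul (leqnn _) h1) (leq_trans h2 (leq_mul (leqnn _) h3)).
  have e2 : u * P <= v * N * k.
    rewrite -(leq_pmul2r F0) -mulnA; apply: leq_trans e1 _; apply: eq_leq.
    clear -u; nia.
  have e3 : u * (p * P) <= (p * k * v) * N.
    clear -e2; nia.
  have e4 : (p * k * v) * N < u * N by rewrite ltn_pmul2r.
  have := leq_ltn_trans e3 e4.
  by rewrite mulnC [u * N]mulnC ltn_pmul2r // expn_gt0.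
set U := \bigcup_(i | true) [set c : C | failb F i L c].
have HU : #|U| < N.
  apply: leq_ltn_trans (card_bigcup_le _ _) _.
  rewrite -(ltn_pmul2l p0) big_distrr /=.
  have : \sum_(i < p) (p * #|[set c : C | failb F i L c]| + 1) <= \sum_(i < p) N.
    by apply: leq_sum => i _; rewrite addn1; apply: Hi.
  rewrite big_split /= !big_const_ord !iter_addn_0.
  move=> h; rewrite mulnC; apply: leq_trans _ h.
  by rewrite mul1n -addn1 leq_add2l.
have [c cU] : exists c : C, c \notin U.
  case: (pickP (fun c : C => c \notin U)) => [c cU | H]; first by exists c.
  exfalso; suff : N <= #|U| by rewrite leqNgt HU.
  apply: subset_leq_card; apply/subsetP => x _.
  by move: (H x) => /= /negbFE.
have Hc : forall i : 'I_p, exists A, (A \in F) && (A \subset [set x | (c x).1 == i]).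
  move=> i.
  have : ~~ failb F i L c.
    apply/negP => fc; move/negP: cU; apply; apply/bigcupP; exists i => //.
    by rewrite inE.
  case/forall_inPn => S SF; rewrite negbK => /eqP S0.
  have [A AF HA] := phi_chain L (Wc i c) SF.
  exists A; rewrite AF /=; apply: (subset_trans HA).
  rewrite S0 setU0; apply/subsetP => x /bigcupP [u _]; rewrite !inE.
  by case/andP.
have [f Hf] := fin_all_exists Hc.
exists f; split; first by move=> i; case/andP: (Hf i).
move=> i j ij; rewrite -setI_eq0; apply/eqP/setP => x; rewrite !inE.
apply/negP => /andP [xi xj].
case/andP: (Hf i) => _ /subsetP /(_ x xi); rewrite inE => /eqP ei.
case/andP: (Hf j) => _ /subsetP /(_ x xj); rewrite inE => /eqP ej.
by move: ij; rewrite -ei -ej eqxx.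
Qed.

Definition Lf (p k : nat) : nat := 3 * (trunc_log 2 (p * k)).+1.
Definition rr (p k : nat) : nat := 64 * (p * Lf p k).

Lemma Lf_ok p k : p * k * 3 ^ Lf p k < 4 ^ Lf p k.
Proof.
rewrite /Lf !expnM.
set m := (trunc_log 2 (p * k)).+1.
have h : p * k < 2 ^ m by apply: trunc_log_ltn.
apply: (@leq_trans (2 ^ m * (3 ^ 3) ^ m)).
  by rewrite ltn_pmul2r // expn_gt0.
rewrite -expnMn leq_exp2r //.
Qed.

Lemma rr_mono p k k' : k' <= k -> rr p k' <= rr p k.
Proof.
move=> h; rewrite /rr /Lf leq_mul2l; apply/orP; right.
rewrite leq_mul2l; apply/orP; right.
rewrite leq_mul2l; apply/orP; right.
rewrite ltnS; apply: leq_trunc_log; exact: leq_mul.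
Qed.

Lemma sunflower_spread (T : finType) (F : {set {set T}}) p k :
  0 < k -> 0 < p -> (forall A, A \in F -> #|A| = k) -> 0 < #|F| ->
  (forall Z : {set T}, Z != set0 ->
     #|[set A in F | Z \subset A]| * (rr p k) ^ #|Z| <= #|F|) ->
  exists S : {set {set T}}, S \subset F /\ is_sunflower p S.
Proof.
move=> k0 p0 Hk F0 spread.
have [f [fF fD]] := disjoint_members k0 p0 (Lf_ok p k) Hk F0 spread.
have fne : forall i, f i != set0.
  move=> i; apply/eqP => e; have := Hk _ (fF i); rewrite e cards0 => k00.
  by rewrite -k00 in k0.
have finj : injective f.
  move=> i j e; case: (eqVneq i j) => // ij.
  have := fD i j ij; rewrite e -setI_eq0 setIid => /eqP h.
  by have := fne j; rewrite h eqxx.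
exists (f @: setT); split.
  by apply/subsetP => A /imsetP [i _ ->].
split; first by rewrite card_imset // cardsT card_ord.
exists set0 => A B /imsetP [i _ ->] /imsetP [j _ ->] ne.
apply: disjoint_setI0; apply: fD.
by apply: contraNneq ne => ->.
Qed.

Lemma sunflower_nat (T : finType) (F : {set {set T}}) p k :
  2 <= p -> 1 <= k -> (forall A, A \in F -> #|A| = k) ->
  (rr p k) ^ k < #|F| ->
  exists S : {set {set T}}, S \subset F /\ is_sunflower p S.
Proof.
move=> p2 k1; elim: k {-2}k (leqnn k) k1 F => [|n IH] k kn k1 F Hk HF.
  by move: kn k1; rewrite leqn0 => /eqP ->.
have p0 : 0 < p by apply: leq_trans p2.
set r := rr p k in HF.
have r0 : 0 < r by rewrite /r /rr /Lf !muln_gt0 p0.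
have F0 : 0 < #|F| by apply: leq_ltn_trans HF.
case spr : [forall Z : {set T}, (Z != set0) ==>
              (#|[set A in F | Z \subset A]| * r ^ #|Z| <= #|F|)].
  apply: (sunflower_spread k1 p0 Hk F0) => Z Z0.
  by move/forallP: spr => /(_ Z); rewrite Z0.
move/negbT/forallPn: spr => [Z]; rewrite negb_imply -ltnNge => /andP [Z0 HZ].
set FZ := [set A in F | Z \subset A] in HZ.
set z := #|Z| in HZ.
have z0 : 0 < z by rewrite /z card_gt0.
have FZ0 : 0 < #|FZ|.
  by rewrite lt0n; apply/eqP => e; rewrite e mul0n in HZ.
have [A0 A0F] : exists A, A \in FZ.
  by move: FZ0; rewrite card_gt0 => /set0Pn.
have zk : z <= k.
  by move: A0F; rewrite inE => /andP [AF ZA]; rewrite /z -(Hk _ AF) subset_leq_card.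
have zk' : z < k.
  rewrite ltn_neqAle zk andbT; apply/eqP => zk''.
  have : #|FZ| <= 1.
    rewrite -(cards1 Z); apply: subset_leq_card; apply/subsetP => A.
    rewrite !inE => /andP [AF ZA]; apply/eqP; apply/esym/eqP.
    by rewrite eqEcard ZA /= (Hk _ AF) -zk''.
  move=> h1.
  have : #|FZ| * r ^ z <= r ^ k by rewrite zk''; apply: leq_trans (leq_mul h1 (leqnn _)) _; rewrite mul1n.
  move=> h2; have := leq_ltn_trans h2 (ltn_trans HF HZ); by rewrite ltnn.
set k' := k - z.
have k'1 : 1 <= k' by rewrite /k' subn_gt0.
pose G := [set A :\: Z | A in FZ].
have injG : {in FZ &, injective (fun A => A :\: Z)}.
  move=> A B; rewrite !inE => /andP [_ ZA] /andP [_ ZB] e.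
  apply/setP => x; case xZ: (x \in Z).
    by rewrite (subsetP ZA _ xZ) (subsetP ZB _ xZ).
  by move/setP: e => /(_ x); rewrite !inE xZ.
have cG : #|G| = #|FZ| by rewrite card_in_imset.
have HkG : forall B, B \in G -> #|B| = k'.
  move=> B /imsetP [A]; rewrite inE => /andP [AF ZA] ->.
  by rewrite cardsD (setIidPr ZA) (Hk _ AF).
have HG : (rr p k') ^ k' < #|G|.
  have h1 : rr p k' <= r by apply: rr_mono; rewrite /k' leq_subr.
  apply: (@leq_ltn_trans (r ^ k')); first by rewrite leq_exp2r.
  have rz : 0 < r ^ z by rewrite expn_gt0 r0.
  rewrite -(ltn_pmul2r rz) -expnD /k' subnK // cG.
  exact: ltn_trans HF HZ.
have k'n : k' <= n.
  by rewrite /k'; move: kn z0; clear; lia.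
have [S' [S'G [cS' [Y HY]]]] := IH k' k'n k'1 G HkG HG.
have disjZ : forall B, B \in S' -> [disjoint B & Z].
  move=> B /(subsetP S'G) /imsetP [A _ ->].
  rewrite -setI_eq0; apply/eqP/setP => x; rewrite !inE.
  by case: (x \in Z); rewrite ?andbF.
have injS : {in S' &, injective (fun B => B :|: Z)}.
  move=> B1 B2 h1 h2 e; apply/setP => x.
  have d1 := disjZ _ h1; have d2 := disjZ _ h2.
  move/setP: e => /(_ x); rewrite !inE.
  case xZ: (x \in Z); last by rewrite !orbF.
  move=> _.
  move: d1 d2; rewrite -!setI_eq0 => /eqP/setP/(_ x) e1 /eqP/setP/(_ x) e2.
  move: e1 e2; rewrite !inE xZ !andbT => -> ->.
  by [].
exists [set B :|: Z | B in S']; split.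
  apply/subsetP => A' /imsetP [B BS' ->].
  move: (subsetP S'G _ BS') => /imsetP [A]; rewrite inE => /andP [AF ZA] ->.
  suff -> : A :\: Z :|: Z = A by [].
  apply/setP => x; rewrite !inE.
  case xZ: (x \in Z); last by rewrite orbF.
  by rewrite orbT (subsetP ZA _ xZ).
split; first by rewrite card_in_imset.
exists (Y :|: Z) => A' B' /imsetP [A AS' ->] /imsetP [B BS' ->] ne.
rewrite -setUIl HY //.
by apply: contraNneq ne => ->.
Qed.

Unset Implicit Arguments.
From Stdlib Require Import Reals Lra.

Lemma INR_expn (a n : nat) : INR (expn a n) = (INR a ^ n)%R.
Proof.
elim: n => [|n IH]; first by rewrite expn0.
by rewrite expnS mulnE mult_INR IH /=.
Qed.

Lemma ln_le' (x y : R) : (0 < x)%R -> (x <= y)%R -> (ln x <= ln y)%R.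
Proof.
move=> x0 [xy|->]; last by apply: Rle_refl.
by apply: Rlt_le; apply: ln_increasing.
Qed.

Lemma rr_bound (p k : nat) : (2 <= p)%nat -> (1 <= k)%nat ->
  (INR (rr p k) <= 400 * INR p * log2 (INR (p * k)))%R.
Proof.
move=> p2 k1.
have n2 : (2 <= p * k)%nat by rewrite -[2]muln1 leq_mul.
set n := (p * k)%nat in n2 *.
set t := trunc_log 2 n.
have tn : (expn 2 t <= n)%nat by apply: trunc_logP => //; apply: leq_trans n2.
have ln2 : (0 < ln 2)%R by rewrite -ln_1; apply: ln_increasing; lra.
have Rn : (2 <= INR n)%R.
  have h := le_INR _ _ (elimT leP n2); simpl in h; lra.
have Rt : (2 ^ t <= INR n)%R.
  have h := le_INR _ _ (elimT leP tn); rewrite INR_expn in h.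
  by rewrite (_ : 2%R = INR 2) //; simpl; lra.
have L1 : (INR t <= log2 (INR n))%R.
  rewrite /log2; apply: (Rmult_le_reg_r (ln 2)) => //.
  rewrite Rmult_assoc Rinv_l ?Rmult_1_r; last by apply: Rgt_not_eq.
  rewrite -ln_pow; last by lra.
  apply: ln_le' => //; apply: pow_lt; lra.
have L2 : (1 <= log2 (INR n))%R.
  rewrite /log2; apply: (Rmult_le_reg_r (ln 2)) => //.
  rewrite Rmult_assoc Rinv_l ?Rmult_1_r ?Rmult_1_l; last by apply: Rgt_not_eq.
  apply: ln_le' => //; lra.
have e : INR (rr p k) = (64 * (INR p * (3 * (INR t + 1))))%R.
  rewrite /rr /Lf -/n -/t !mulnE !mult_INR [INR t.+1]S_INR.
  rewrite (_ : INR 64 = 64%R); last by rewrite /= ; lra.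
  by rewrite (_ : INR 3 = 3%R); last by rewrite /= ; lra.
rewrite e.
have p0 : (0 <= INR p)%R by apply: pos_INR.
nra.
Qed.

Theorem theorem1 :
  exists alpha : R, (1 < alpha)%R /\
    forall (p k : nat), (2 <= p)%N -> (1 <= k)%N ->
    forall (T : finType) (F : {set {set T}}),
      (forall A : {set T}, A \in F -> #|A| = k) ->
      (INR #|F| > (alpha * INR p * log2 (INR (p * k))) ^ k)%R ->
      exists S : {set {set T}}, S \subset F /\ is_sunflower p S.
Proof.
exists 400%R; split; first lra.
move=> p k p2 k1 T F Hk H.
apply: (sunflower_nat p2 k1 Hk).
have b := rr_bound p k p2 k1.
have x0 : (0 <= INR (rr p k))%R by apply: pos_INR.
have hp := pow_incr _ _ k (conj x0 b).
rewrite -INR_expn in hp.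
apply/ltP; apply: INR_lt; lra.
Qed.
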